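(* Under the standing setup and assumptions (A1)–(A3) described in the context, there exist operators $S^b\in\mathcal A_b$ and $S^t\in\mathcal A_t$ such that $$U|\Omega,\Omega\rangle=S^bS^t|\Omega,\Omega\rangle .$$ Moreover, writing $U|\Omega,\Omega\rangle=\sum_{i\in I,j\in J}X_{ij}|i,j\rangle$, the coefficients factor as $X_{ij}=\alpha_i\beta_j$ for some complex numbers $\alpha_i$ ($i\in I$), $\beta_j$ ($j\in J$).
   Context: Standing setup. $\mathcal H$ is a finite-dimensional complex Hilbert space; $I$ and $J$ are finite index sets and $\{|i,j\rangle: i\in I,j\in J\}$ is an orthonormal family in $\mathcal H$ (physically: low-energy edge states of a gapped 2D system on a cylinder, $i$ labelling the bottom edge and $j$ the top edge, in a fixed topological sector). $V$ denotes their span. Real numbers $\varepsilon^b_i$ ($i\in I$) and $\varepsilon^t_j$ ($j\in J$) are given (physically $\varepsilon^b_i=E^b_i-\mu_bN^b_i$, $\varepsilon^t_j=E^t_j-\mu_tN^t_j$). There is a distinguished index, denoted $\Omega$, in $I$ and in $J$ with $\varepsilon^b_\Omega=\varepsilon^t_\Omega=0\le \varepsilon^b_i,\varepsilon^t_j$ for all $i,j$. For $\delta>0$ put $I_\delta=\{i\in I:\varepsilon^b_i\le\delta\}$, $J_\delta=\{j\in J:\varepsilon^t_j\le\delta\}$, $V_\delta=\mathrm{span}\{|i,j\rangle:i\in I_\delta,j\in J_\delta\}$. $\mathcal A_b$ and $\mathcal A_t$ are sets of linear operators on $\mathcal H$ (''operators supported near the bottom edge / top edge''), each closed under sums, scalar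 multiples, products and adjoints and containing the identity, such that every element of $\mathcal A_b$ commutes with every element of $\mathcal A_t$. $U$ is a unitary on $\mathcal H$ (the flux-insertion evolution, a finite-time evolution by a local Hamiltonian) such that $U^\dagger\mathcal A_bU\subseteq\mathcal A_b$, $U\mathcal A_bU^\dagger\subseteq\mathcal A_b$, $U^\dagger\mathcal A_tU\subseteq\mathcal A_t$, $U\mathcal A_tU^\dagger\subseteq\mathcal A_t$ (idealized Lieb–Robinson locality). Assumptions. (A1) For all $i,i'\in I$ there is $O^b_{i'i}\in\mathcal A_b$ with $O^b_{i'i}|k,j\rangle=\delta_{ki}|i',j\rangle$ for all $k\in I,j\in J$; for all $j,j'\in J$ there is $O^t_{j'j}\in\mathcal A_t$ with $O^t_{j'j}|i,l\rangle=\delta_{lj}|i,j'\rangle$ for all $i\in I,l\in J$. (A2) For all $i\in I$, $j\in J$, $O^b\in\mathcal A_b$, $O^t\in\mathcal A_t$: $\langle i,j|O^bO^t|i,j\rangle=\langle i,j|O^b|i,j\rangle\langle i,j|O^t|i,j\rangle$. (A3) There is $\delta>0$ with $U V_\delta\subseteq V$. *)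

(* Defs.v *)
(* The Hilbert space H is C^n ('cV[C]_n) with the standard
   inner product, C any numClosedFieldType (e.g. the complex numbers). *)
From HB Require Import structures.
From mathcomp Require Import all_boot all_order all_algebra.
Set Implicit Arguments. Unset Strict Implicit. Unset Printing Implicit Defensive.
Import Order.TTheory GRing.Theory Num.Theory.
Local Open Scope ring_scope.

Definition adj (C : numClosedFieldType) (m k : nat) (A : 'M[C]_(m, k)) : 'M[C]_(k, m) :=
  map_mx (fun x => x^*) A^T.

Definition dotp (C : numClosedFieldType) (n : nat) (u v : 'cV[C]_n) : C :=
  (adj u *m v) 0 0.

Definition is_star_alg (C : numClosedFieldType) (n : nat) (A : 'M[C]_n -> Prop) :=
  [/\ A 1%:M,
      (forall X Y, A X -> A Y -> A (X + Y)),
      (forall (c : C) X, A X -> A (c *: X)),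
      (forall X Y, A X -> A Y -> A (X *m Y)) &
      (forall X, A X -> A (adj X))].

Definition in_span (C : numClosedFieldType) (n : nat) (I J : finType)
  (e : I -> J -> 'cV[C]_n) (P : pred I) (Q : pred J) (v : 'cV[C]_n) : Prop :=
  exists c : I -> J -> C, v = \sum_(i | P i) \sum_(j | Q j) c i j *: e i j.

(* Main.v *)
Require Import Defs.
From HB Require Import structures.
From mathcomp Require Import all_boot all_order all_algebra.
Import Order.TTheory GRing.Theory Num.Theory.
Local Open Scope ring_scope.
Set Implicit Arguments. Unset Strict Implicit.

Lemma dotpE (C : numClosedFieldType) (n : nat) (u v : 'cV[C]_n) :
  dotp u v = \sum_k (u k 0)^* * v k 0.
Proof. by rewrite /dotp /adj !mxE; apply: eq_bigr => k _; rewrite !mxE. Qed.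

Lemma dotp_sumr (C : numClosedFieldType) (n : nat) (T : finType) (u : 'cV[C]_n)
  (F : T -> 'cV[C]_n) : dotp u (\sum_t F t) = \sum_t dotp u (F t).
Proof. by rewrite /dotp mulmx_sumr summxE. Qed.

Lemma dotpZr (C : numClosedFieldType) (n : nat) (u v : 'cV[C]_n) c :
  dotp u (c *: v) = c * dotp u v.
Proof. by rewrite /dotp -scalemxAr mxE. Qed.

Lemma dotpC (C : numClosedFieldType) (n : nat) (u v : 'cV[C]_n) :
  dotp u v = (dotp v u)^*.
Proof.
rewrite !dotpE rmorph_sum; apply: eq_bigr => k _.
rewrite rmorphM mulrC; congr (_ * _); exact/esym/conjCK.
Qed.

Lemma adjM (C : numClosedFieldType) (m k p : nat) (A : 'M[C]_(m, k)) (B : 'M[C]_(k, p)) :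
  adj (A *m B) = adj B *m adj A.
Proof. by rewrite /adj trmx_mul (map_mxM Num.Def.conjC). Qed.

Lemma dotp_mull (C : numClosedFieldType) (n : nat) (A : 'M[C]_n) (u v : 'cV[C]_n) :
  dotp (A *m u) v = dotp u (adj A *m v).
Proof. by rewrite /dotp adjM mulmxA. Qed.
Arguments dotp : simpl never.
Lemma coefE (C : numClosedFieldType) (n : nat) (I J : finType)
  (e : I -> J -> 'cV[C]_n) (psi : 'cV[C]_n) (X : I -> J -> C) :
  (forall i j i' j', dotp (e i j) (e i' j') = ((i == i') && (j == j'))%:R) ->
  psi = \sum_i \sum_j X i j *: e i j ->
  forall a b, dotp (e a b) psi = X a b.
Proof.
move=> ho -> a b; rewrite dotp_sumr (bigD1 a) //= [X in _ + X]big1 ?addr0.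
  rewrite dotp_sumr (bigD1 b) //= [X in _ + X]big1 ?addr0.
    by rewrite dotpZr ho !eqxx mulr1.
  by move=> j /negbTE nj; rewrite dotpZr ho eqxx eq_sym nj mulr0.
move=> i /negbTE ni; rewrite dotp_sumr big1 // => j _.
by rewrite dotpZr ho eq_sym ni mulr0.
Qed.

Lemma actT (C : numClosedFieldType) (n : nat) (I J : finType)
  (e : I -> J -> 'cV[C]_n) (X : I -> J -> C) (O : 'M[C]_n) j j' :
  (forall i l, O *m e i l = if l == j then e i j' else 0) ->
  O *m (\sum_i \sum_j X i j *: e i j) = \sum_i X i j *: e i j'.
Proof.
move=> hO.
have inner : forall i, O *m (\sum_l X i l *: e i l) = X i j *: e i j'.
  move=> i; rewrite mulmx_sumr (bigD1 j) //= [X in _ + X]big1 ?addr0.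
    by rewrite -scalemxAr hO eqxx.
  by move=> l /negbTE nl; rewrite -scalemxAr hO nl scaler0.
by rewrite mulmx_sumr; apply: eq_bigr => i _; exact: inner.
Qed.

Lemma actB (C : numClosedFieldType) (n : nat) (I J : finType)
  (e : I -> J -> 'cV[C]_n) (X : I -> J -> C) (O : 'M[C]_n) i i' :
  (forall k l, O *m e k l = if k == i then e i' l else 0) ->
  O *m (\sum_k \sum_l X k l *: e k l) = \sum_l X i l *: e i' l.
Proof.
move=> hO.
have inner : forall k, O *m (\sum_l X k l *: e k l) =
    if k == i then \sum_l X i l *: e i' l else 0.
  move=> k; rewrite mulmx_sumr; case: eqP => [->|nk].
    by apply: eq_bigr => l _; rewrite -scalemxAr hO eqxx.
  by rewrite big1 // => l _; rewrite -scalemxAr hO; move/eqP/negbTE: nk => ->; rewrite scaler0.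
rewrite mulmx_sumr (eq_bigr _ (fun k _ => inner k)).
by rewrite -big_mkcond big_pred1_eq.
Qed.

Lemma actB1 (C : numClosedFieldType) (n : nat) (I J : finType)
  (e : I -> J -> 'cV[C]_n) (Y : I -> C) (O : 'M[C]_n) i i' j :
  (forall k l, O *m e k l = if k == i then e i' l else 0) ->
  O *m (\sum_k Y k *: e k j) = Y i *: e i' j.
Proof.
move=> hO; rewrite mulmx_sumr (bigD1 i) //= big1 ?addr0.
  by rewrite -scalemxAr hO eqxx.
by move=> k /negbTE nk; rewrite -scalemxAr hO nk scaler0.
Qed.

Lemma factor (C : numClosedFieldType) (n : nat) (I J : finType)
  (e : I -> J -> 'cV[C]_n) (psi : 'cV[C]_n) (Ab At : 'M[C]_n -> Prop) :
  (forall i j i' j', dotp (e i j) (e i' j') = ((i == i') && (j == j'))%:R) ->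
  (forall i i', exists O, Ab O /\
     forall k j, O *m e k j = if k == i then e i' j else 0) ->
  (forall j j', exists O, At O /\
     forall i l, O *m e i l = if l == j then e i j' else 0) ->
  (forall Ob Ot, Ab Ob -> At Ot ->
     dotp psi (Ob *m Ot *m psi) = dotp psi (Ob *m psi) * dotp psi (Ot *m psi)) ->
  forall X : I -> J -> C, psi = \sum_i \sum_j X i j *: e i j ->
  exists (alpha : I -> C) (beta : J -> C), forall i j, X i j = alpha i * beta j.
Proof.
move=> ho hb ht hprod X hX.
have cE := coefE ho hX.
have cE' : forall a b, dotp psi (e a b) = (X a b)^*.
  by move=> a b; rewrite dotpC cE.
case: (pickP (fun p : I * J => X p.1 p.2 != 0)) => [[i0 j0] /= nz | all0]; last first.
  exists (fun _ => 0), (fun _ => 0) => i j; rewrite mulr0.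
  by move/negbFE/eqP: (all0 (i, j)).
pose a i := dotp psi (\sum_l X i l *: e i0 l).
pose b j := dotp psi (\sum_k X k j *: e k j0).
have key : forall i j, X i j * (X i0 j0)^* = a i * b j.
  move=> i j.
  have [Ob [aOb hOb]] := hb i i0.
  have [Ot [aOt hOt]] := ht j j0.
  have := hprod _ _ aOb aOt.
  rewrite -mulmxA {2 4 6}hX (actT X hOt) (actB1 (fun k => X k j) j0 hOb) (actB X hOb).
  by rewrite dotpZr cE'; move=> H; exact: H.
have nz' : (X i0 j0)^* != 0 by rewrite conjC_eq0.
exists (fun i => a i / (X i0 j0)^*), b => i j.
by rewrite mulrAC -key mulfK.
Qed.

Lemma star_sum (C : numClosedFieldType) (n : nat) (T : finType) (A : 'M[C]_n -> Prop)
  (F : T -> 'M[C]_n) : is_star_alg A -> (forall t, A (F t)) -> A (\sum_t F t).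
Proof.
case=> h1 hD hZ _ _ hF; apply: (big_ind A) => //.
by rewrite -(scale0r (1%:M : 'M[C]_n)); apply: hZ.
Qed.

Theorem mainTheorem3 (C : numClosedFieldType) (n : nat) (I J : finType)
  (e : I -> J -> 'cV[C]_n)
  (eb : I -> C) (et : J -> C) (OmI : I) (OmJ : J)
  (Ab At : 'M[C]_n -> Prop) (U : 'M[C]_n) :
  (* orthonormal family |i,j> *)
  (forall i j i' j', dotp (e i j) (e i' j') = ((i == i') && (j == j'))%:R) ->
  (* the epsilons are real, nonnegative, zero at Omega *)
  eb OmI = 0 -> et OmJ = 0 ->
  (forall i, 0 <= eb i) -> (forall j, 0 <= et j) ->
  (* operator algebras near bottom / top edge *)
  is_star_alg Ab -> is_star_alg At ->
  (forall X Y, Ab X -> At Y -> X *m Y = Y *m X) ->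
  (* U unitary and locality-preserving *)
  adj U *m U = 1%:M -> U *m adj U = 1%:M ->
  (forall X, Ab X -> Ab (adj U *m X *m U)) ->
  (forall X, Ab X -> Ab (U *m X *m adj U)) ->
  (forall X, At X -> At (adj U *m X *m U)) ->
  (forall X, At X -> At (U *m X *m adj U)) ->
  (* (A1) *)
  (forall i i', exists O, Ab O /\
     forall k j, O *m e k j = if k == i then e i' j else 0) ->
  (forall j j', exists O, At O /\
     forall i l, O *m e i l = if l == j then e i j' else 0) ->
  (* (A2) *)
  (forall i j Ob Ot, Ab Ob -> At Ot ->
     dotp (e i j) (Ob *m Ot *m e i j) =
     dotp (e i j) (Ob *m e i j) * dotp (e i j) (Ot *m e i j)) ->
  (* (A3) *)
  (exists delta : C, 0 < delta /\
     forall v, in_span e (fun i => eb i <= delta) (fun j => et j <= delta) v ->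
               in_span e predT predT (U *m v)) ->
  (* conclusion *)
  (exists Sb St, Ab Sb /\ At St /\ U *m e OmI OmJ = Sb *m St *m e OmI OmJ) /\
  in_span e predT predT (U *m e OmI OmJ) /\
  (forall X : I -> J -> C,
     U *m e OmI OmJ = \sum_i \sum_j X i j *: e i j ->
     exists (alpha : I -> C) (beta : J -> C),
       forall i j, X i j = alpha i * beta j).
Proof.
move=> ho ebO etO eb0 et0 sAb sAt _ hUU hUU' hb1 _ ht1 _ hb ht hA2 [d [d0 hA3]].
set psi := U *m e OmI OmJ.
have hspan : in_span e predT predT psi.
  apply: hA3; exists (fun i j => ((i == OmI) && (j == OmJ))%:R).
  rewrite (bigD1 OmI) /=; last by rewrite ebO ltW.
  rewrite (bigD1 OmJ) /=; last by rewrite etO ltW.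
  rewrite !eqxx scale1r [X in _ + X]big1 ?addr0.
    rewrite [X in _ + X]big1 ?addr0 // => j /andP [_ nj].
    by rewrite (negbTE nj) scale0r.
  move=> i /andP [_ ni].
  by rewrite big1 // => j _; rewrite (negbTE ni) scale0r.
have transfer : forall M, dotp psi (M *m psi) = dotp (e OmI OmJ) ((adj U *m M *m U) *m e OmI OmJ).
  by move=> M; rewrite /psi dotp_mull !mulmxA.
have hprod : forall Ob Ot, Ab Ob -> At Ot ->
     dotp psi (Ob *m Ot *m psi) = dotp psi (Ob *m psi) * dotp psi (Ot *m psi).
  move=> Ob Ot aOb aOt; rewrite !transfer -hA2; [|exact: hb1|exact: ht1].
  congr (dotp _ (_ *m _)).
  by rewrite !mulmxA -(mulmxA (adj U *m Ob) U (adj U)) hUU' mulmx1.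
have fact := factor ho hb ht hprod.
split; last by split.
have [X hX] := hspan.
have [alpha [beta hab]] := fact X hX.
have [Ob hOb] := fin_all_exists (fun i => hb OmI i).
have [Ot hOt] := fin_all_exists (fun j => ht OmJ j).
exists (\sum_i alpha i *: Ob i), (\sum_j beta j *: Ot j); split.
  by apply: star_sum => // i; case: sAb => _ _ hZ _ _; apply: hZ; case: (hOb i).
split.
  by apply: star_sum => // j; case: sAt => _ _ hZ _ _; apply: hZ; case: (hOt j).
have e1 : (\sum_j beta j *: Ot j) *m e OmI OmJ = \sum_j beta j *: e OmI j.
  rewrite mulmx_suml; apply: eq_bigr => j _.
  by rewrite -scalemxAl; case: (hOt j) => _ ->; rewrite eqxx.
have e2 : forall j, (\sum_i alpha i *: Ob i) *m e OmI j = \sum_i alpha i *: e i j.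
  move=> j; rewrite mulmx_suml; apply: eq_bigr => i _.
  by rewrite -scalemxAl; case: (hOb i) => _ ->; rewrite eqxx.
rewrite -mulmxA e1 mulmx_sumr.
have -> : psi = \sum_i \sum_j X i j *: e i j by exact: hX.
rewrite exchange_big; apply: eq_bigr => j _.
rewrite -scalemxAr e2 scaler_sumr; apply: eq_bigr => i _.
by rewrite scalerA hab mulrC.
Qed.
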